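(* Suppose $\operatorname{tr}\big((I-\widehat\Pi)\Pi^*\big)\le\delta^2$ for some $\delta\in[0,1)$, and let $\widehat\Pi_{m^*}$ be the orthogonal projector onto the subspace spanned by eigenvectors of $\widehat\Pi$ corresponding to its $m^*$ largest eigenvalues. Then $\operatorname{tr}\big((I-\widehat\Pi_{m^*})\Pi^*\big)\le\delta^2/(1-\delta^2)$.
   Context: $\Pi^*$ is the orthogonal projector onto an $m^*$-dimensional subspace of $\mathbb R^d$. $I$ is the $d\times d$ identity, $A\preceq B$ means $B-A$ is positive semidefinite. Let $\hat\beta_1,\dots,\hat\beta_L\in\mathbb R^d$ be arbitrary vectors, $\mathcal A_{m^*}=\{\Pi\in\mathbb R^{d\times d}:\Pi=\Pi^\top,\ 0\preceq\Pi\preceq I,\ \operatorname{tr}\Pi\le m^*\}$, and let $\widehat\Pi$ be a minimizer over $\Pi\in\mathcal A_{m^*}$ of $\max_\ell\hat\beta_\ell^\top(I-\Pi)\hat\beta_\ell$. *)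

(* Defs.v *)
From HB Require Import structures.
From mathcomp Require Import all_boot all_order all_algebra.
From mathcomp Require Export reals.
Set Implicit Arguments. Unset Strict Implicit. Unset Printing Implicit Defensive.
Import Order.TTheory GRing.Theory Num.Theory.
Local Open Scope ring_scope.

Definition psd (R : realFieldType) (d : nat) (A : 'M[R]_d) : Prop :=
  forall v : 'cV[R]_d, 0 <= (v^T *m A *m v) 0 0.

Definition loewner_le (R : realFieldType) (d : nat) (A B : 'M[R]_d) : Prop :=
  psd (B - A).

Definition orth_proj (R : realFieldType) (d m : nat) (P : 'M[R]_d) : Prop :=
  P^T = P /\ P *m P = P /\ \rank P = m.

Definition in_Aset (R : realFieldType) (d m : nat) (P : 'M[R]_d) : Prop :=
  P^T = P /\ loewner_le 0 P /\ loewner_le P 1%:M /\ \tr P <= m%:R.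

(* Objective: max_l beta_l^T (I - Π) beta_l  (L >= 1 assumed separately). *)
Definition objective (R : realFieldType) (d L : nat) (beta : 'I_L -> 'cV[R]_d)
  (P : 'M[R]_d) : R :=
  \big[Num.max/0]_(l < L) ((beta l)^T *m (1%:M - P) *m beta l) 0 0.

Definition top_eig_proj (R : realFieldType) (d m : nat) (Pi Pm : 'M[R]_d) : Prop :=
  exists (U : 'M[R]_d) (lam : 'rV[R]_d),
    U^T *m U = 1%:M /\
    (forall i j : 'I_d, (i <= j)%N -> lam 0 j <= lam 0 i) /\
    Pi = U *m diag_mx lam *m U^T /\
    Pm = \sum_(i < d | (i < m)%N) (col i U *m (col i U)^T).

(* Main.v *)
Require Import Defs.
From HB Require Import structures.
From mathcomp Require Import all_boot all_order all_algebra.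
From mathcomp Require Import ring lra.
From mathcomp Require Import reals.
Import Order.TTheory GRing.Theory Num.Theory.
Local Open Scope ring_scope.

Lemma colK (R : comNzRingType) d (U M : 'M[R]_d) (i : 'I_d) :
  ((col i U)^T *m M *m col i U) 0 0 = (U^T *m M *m U) i i.
Proof.
rewrite tr_col -row_mul colE mulmxA -row_mul -colE.
by rewrite !mxE.
Qed.

Lemma psd_proj (R : realFieldType) d (P : 'M[R]_d) (v : 'cV[R]_d) :
  P^T = P -> P *m P = P -> 0 <= (v^T *m P *m v) 0 0.
Proof.
move=> Ps Pi.
have -> : v^T *m P *m v = (P *m v)^T *m (P *m v).
  by rewrite trmx_mul Ps mulmxA -[v^T *m P *m P]mulmxA Pi.
rewrite mxE; apply: sumr_ge0 => k _; rewrite mxE; by rewrite -expr2 sqr_ge0.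
Qed.

Lemma sym_idemC (R : comNzRingType) d (P : 'M[R]_d) :
  P^T = P -> P *m P = P -> (1%:M - P)^T = 1%:M - P /\ (1%:M - P) *m (1%:M - P) = 1%:M - P.
Proof.
move=> Ps Pi; split; first by rewrite linearB /= trmx1 Ps.
by rewrite mulmxBl mul1mx !mulmxBr mulmx1 Pi subrr subr0.
Qed.
Lemma trace_idem (F : fieldType) n (A : 'M[F]_n) : A *m A = A -> \tr A = (\rank A)%:R.
Proof.
move=> AA.
set C := col_base A; set B := row_base A.
have eA : C *m B = A by exact: mulmx_base.
have fB : row_free B by exact: row_base_free.
have fC : row_free C^T by rewrite /row_free mxrank_tr; exact: col_base_full.
have h1 : C *m B *m C = C.
  apply: (row_free_inj fB); rewrite /=; idtac.
  by rewrite eA -mulmxA eA AA.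
have h2 : B *m C = 1%:M.
  apply: trmx_inj; apply: (row_free_inj fC).
  by rewrite -trmx_mul mulmxA h1 trmx1 mul1mx.
have -> : \tr A = \tr (C *m B) by rewrite eA.
by rewrite mxtrace_mulC h2 mxtrace1.
Qed.
Lemma scalar_part (R : realFieldType) d m (a lam : 'I_d -> R) (delta : R) :
  (m <= d)%N ->
  (forall i, 0 <= a i) -> (forall i, a i <= 1) ->
  (forall i, 0 <= lam i) -> (forall i, lam i <= 1) ->
  (forall i j : 'I_d, (i <= j)%N -> lam j <= lam i) ->
  \sum_i a i = m%:R -> \sum_i lam i <= m%:R ->
  \sum_i (1 - lam i) * a i <= delta ^+ 2 ->
  0 <= delta -> delta < 1 ->
  \sum_(i : 'I_d | ~~ (i < m)%N) a i <= delta ^+ 2 / (1 - delta ^+ 2).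
Proof.
move=> md a0 a1 l0 l1 srt sa sl hS d0 d1.
set S := \sum_i (1 - lam i) * a i.
set x := \sum_(i : 'I_d | ~~ (i < m)%N) a i.
have [c [cT cB]] : exists c, (forall i : 'I_d, (i < m)%N -> c <= lam i) /\
                          (forall i : 'I_d, ~~ (i < m)%N -> lam i <= c).
  case Em: m => [|m'].
    by exists 1; split => // i _; exact: l1.
  have md' : (m' < d)%N by rewrite -Em.
  exists (lam (Ordinal md')); split => i hi; apply: srt => //=.
  by rewrite -ltnNge in hi; exact: ltnW.
have KF : \sum_i lam i * a i <= \sum_(i : 'I_d | (i < m)%N) lam i.
  rewrite (bigID (fun i : 'I_d => (i < m)%N)) /=.
  rewrite -subr_ge0.
  have -> : \sum_(i : 'I_d | (i < m)%N) lam i - (\sum_(i : 'I_d | (i < m)%N) lam i * a i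
     + \sum_(i : 'I_d | ~~ (i < m)%N) lam i * a i)
     = \sum_(i : 'I_d | (i < m)%N) lam i * (1 - a i) - \sum_(i : 'I_d | ~~ (i < m)%N) lam i * a i.
    rewrite opprD addrA; congr (_ - _).
    by rewrite -sumrB; apply: eq_bigr => i _; rewrite mulrBr mulr1.
  have e1 : \sum_(i : 'I_d | (i < m)%N) c * (1 - a i) <= \sum_(i : 'I_d | (i < m)%N) lam i * (1 - a i).
    by apply: ler_sum => i hi; apply: ler_wpM2r; [rewrite subr_ge0|apply: cT].
  have e2 : \sum_(i : 'I_d | ~~ (i < m)%N) lam i * a i <= \sum_(i : 'I_d | ~~ (i < m)%N) c * a i.
    by apply: ler_sum => i hi; apply: ler_wpM2r; [|apply: cB].
  have e3 : \sum_(i : 'I_d | (i < m)%N) c * (1 - a i) - \sum_(i : 'I_d | ~~ (i < m)%N) c * a i = 0.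
    rewrite -!mulr_sumr -mulrBr; apply/eqP; rewrite mulf_eq0; apply/orP; right.
    rewrite sumrB.
    have hm : \sum_(i < d | (i < m)%N) (1 : R) = m%:R.
      by rewrite -(big_ord_widen _ (fun _ => 1) md) sumr_const card_ord.
    rewrite hm -sa [\sum_i a i](bigID (fun i : 'I_d => (i < m)%N)) /=.
    apply/eqP; lra.
  lra.
have eS : S = m%:R - \sum_i lam i * a i.
  by rewrite /S -sa -sumrB; apply: eq_bigr => i _; rewrite mulrBl mul1r.
have sT : \sum_i lam i = \sum_(i : 'I_d | (i < m)%N) lam i + \sum_(i : 'I_d | ~~ (i < m)%N) lam i.
  by rewrite (bigID (fun i : 'I_d => (i < m)%N)).
have hB : forall j : 'I_d, ~~ (j < m)%N -> lam j <= S.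
  move=> j hj.
  have : lam j <= \sum_(i : 'I_d | ~~ (i < m)%N) lam i.
    rewrite (bigD1 j) //= lerDl; apply: sumr_ge0 => i _; exact: l0.
  lra.
have x0 : 0 <= x by apply: sumr_ge0 => i _; exact: a0.
have hx : (1 - S) * x <= S.
  have sS : S = \sum_(i : 'I_d | (i < m)%N) (1 - lam i) * a i + \sum_(i : 'I_d | ~~ (i < m)%N) (1 - lam i) * a i.
    by rewrite /S (bigID (fun i : 'I_d => (i < m)%N)).
  have p1 : 0 <= \sum_(i : 'I_d | (i < m)%N) (1 - lam i) * a i.
    by apply: sumr_ge0 => i _; apply: mulr_ge0; [rewrite subr_ge0|].
  have p2 : (1 - S) * x <= \sum_(i : 'I_d | ~~ (i < m)%N) (1 - lam i) * a i.
    rewrite /x mulr_sumr; apply: ler_sum => i hi; apply: ler_wpM2r => //.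
    by have := hB i hi; lra.
  lra.
have hSd : S <= delta ^+ 2 by [].
have dd : delta ^+ 2 < 1.
  by rewrite expr2; nra.
rewrite ler_pdivlMr; last by lra.
have : x * (1 - delta ^+ 2) <= x * (1 - S).
  by apply: ler_wpM2l => //; lra.
rewrite [x * (1 - S)]mulrC. lra.
Qed.

Lemma subdiag (R : comNzRingType) d (X : 'M[R]_d) i : (1%:M - X) i i = 1 - X i i.
Proof. by rewrite !mxE eqxx. Qed.

Arguments colK {R d} U M i.
Arguments psd_proj {R d P} v.
Arguments sym_idemC {R d P}.
Arguments trace_idem {F n A}.

Theorem lemma3 (R : realType) (d mstar L : nat) (Pistar : 'M[R]_d)
  (beta : 'I_L -> 'cV[R]_d) (Pihat Pihat_m : 'M[R]_d) (delta : R) :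
  (mstar <= d)%N ->
  (0 < L)%N ->
  orth_proj mstar Pistar ->
  in_Aset mstar Pihat ->
  (forall P : 'M[R]_d, in_Aset mstar P -> objective beta Pihat <= objective beta P) ->
  0 <= delta -> delta < 1 ->
  \tr ((1%:M - Pihat) *m Pistar) <= delta ^+ 2 ->
  top_eig_proj mstar Pihat Pihat_m ->
  \tr ((1%:M - Pihat_m) *m Pistar) <= delta ^+ 2 / (1 - delta ^+ 2).
Proof.
move=> md _ [Ps [Pi Prk]] [Hs [H0 [H1 Htr]]] _ d0 d1 hS [U [lam [UU [srt [eH eM]]]]].
have UUt : U *m U^T = 1%:M by exact: mulmx1C.
set A := U^T *m Pistar *m U.
have trU : forall M : 'M[R]_d, \tr (U^T *m M *m U) = \tr M.
  by move=> M; rewrite mxtrace_mulC mulmxA UUt mul1mx.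
have [Cs Ci] := sym_idemC Ps Pi.
have a0 : forall i, 0 <= A i i by move=> i; rewrite -colK; exact: psd_proj.
have a1 : forall i, A i i <= 1.
  move=> i; have := psd_proj (col i U) Cs Ci; rewrite colK.
  rewrite mulmxBr mulmxBl mulmx1 UU subdiag -/A; lra.
have eL : U^T *m Pihat *m U = diag_mx lam.
  by rewrite eH !mulmxA UU mul1mx -mulmxA UU mulmx1.
have l0 : forall i, 0 <= lam 0 i.
  move=> i; have := H0 (col i U); rewrite /loewner_le subr0 colK eL mxE eqxx /=.
  by rewrite mulr1n.
have l1 : forall i, lam 0 i <= 1.
  move=> i; have := H1 (col i U); rewrite /loewner_le colK.
  rewrite mulmxBr mulmxBl mulmx1 UU eL subdiag mxE eqxx /= mulr1n; lra.
have sa : \sum_i A i i = mstar%:R.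
  by rewrite -/(\tr A) trU trace_idem // Prk.
have sl : \sum_i lam 0 i <= mstar%:R by rewrite -mxtrace_diag -eL trU.
have eS : \tr ((1%:M - Pihat) *m Pistar) = \sum_i (1 - lam 0 i) * A i i.
  rewrite -trU.
  have -> : U^T *m ((1%:M - Pihat) *m Pistar) *m U = (1%:M - diag_mx lam) *m A.
    have -> : 1%:M - diag_mx lam = U^T *m (1%:M - Pihat) *m U.
      by rewrite mulmxBr mulmxBl mulmx1 UU eL.
    rewrite /A !mulmxA -[U^T *m (1%:M - Pihat) *m U *m U^T]mulmxA UUt mulmx1.
    done.
  rewrite mulmxBl mul1mx mul_diag_mx linearB /= /mxtrace -sumrB.
  by apply: eq_bigr => i _; rewrite !mxE mulrBl mul1r.
have eX : \tr ((1%:M - Pihat_m) *m Pistar) = \sum_(i : 'I_d | ~~ (i < mstar)%N) A i i.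
  rewrite mulmxBl mul1mx (raddfB (@mxtrace _ d)) eM mulmx_suml (raddf_sum (@mxtrace _ d)).
  have -> : \sum_(i < d | (i < mstar)%N) \tr (col i U *m (col i U)^T *m Pistar)
          = \sum_(i < d | (i < mstar)%N) A i i.
    apply: eq_bigr => i _.
    by rewrite -mulmxA mxtrace_mulC /mxtrace big_ord1 colK.
  have tP : \tr Pistar = \sum_i A i i by rewrite -(trU Pistar).
  have sp := bigID (fun i : 'I_d => (i < mstar)%N) predT (fun i => A i i).
  move: tP sp; rewrite /= => tP sp.
  apply/eqP; rewrite subr_eq addrC -sp -tP //.
rewrite eX; apply: (@scalar_part R d mstar (fun i => A i i) (fun i => lam 0 i)) => //.
by move: hS; rewrite eS.
Qed.
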